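(* Let $D\ge1$ and let $\mathcal{F}$ be a collection of pairwise non-overlapping $D$-simplices on $\gamma_D$ whose vertex sets have union exactly $A$, $|A|=n$, and suppose $\mathcal{F}$ is non-extendable. Then there is a collection $\mathcal{F}'\supseteq\mathcal{F}$ of pairwise non-overlapping $D$-simplices on $\gamma_D$ whose vertex sets have union a set of exactly $n+1$ points of $\gamma_D$, such that $\mathcal{F}'$ is non-extendable.
   Context: $\gamma_D=\{(t,t^2,\dots,t^D):t\in\mathbb{R}\}$. A $D$-simplex on $\gamma_D$ is $\mathrm{conv}(\sigma)$ for $\sigma\subseteq\gamma_D$, $|\sigma|=D+1$. Simplices overlap if $\mathrm{conv}(\sigma)\cap\mathrm{conv}(\tau)\supsetneq\mathrm{conv}(\sigma\cap\tau)$. A collection of simplices on $\gamma_D$ whose vertex sets have union $A$ is non-extendable if there is no triangulation of $\mathrm{conv}(A)$ (geometric simplicial complex with union $\mathrm{conv}(A)$) all of whose vertices lie in $A$ and which contains every simplex of the collection. *)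

(* Defs.v *)
From HB Require Import structures.
From mathcomp Require Import all_boot all_order all_algebra finmap.
From mathcomp Require Import reals.
Unset Printing Implicit Defensive.
Import Order.TTheory GRing.Theory Num.Theory.
Local Open Scope ring_scope.
Local Open Scope fset_scope.

Section MomentCurve.
Context {R : realType}.

Definition gam (D : nat) (t : R) : 'rV[R]_D := \row_(i < D) t ^+ i.+1.

(* A finite set of points of gamma_D is encoded by its finite set of
   parameters s : {fset R} (t |-> gam D t is injective for D >= 1). *)

Definition inConv (D : nat) (s : {fset R}) (x : 'rV[R]_D) : Prop :=
  exists w : R -> R,
    [/\ forall t, t \in s -> 0 <= w t,
        \sum_(t <- s) w t = 1
      & \sum_(t <- s) w t *: gam D t = x].

Definition Dsimplex (D : nat) (s : {fset R}) : Prop := #|` s| = D.+1.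

Definition overlap (D : nat) (s t : {fset R}) : Prop :=
  exists x, [/\ inConv D s x, inConv D t x & ~ inConv D (s `&` t) x].

Definition nonoverlapping_Dsimplices (D : nat) (F : {fset {fset R}}) : Prop :=
  (forall s, s \in F -> Dsimplex D s) /\
  (forall s t, s \in F -> t \in F -> ~ overlap D s t).

Definition vertex_union (F : {fset {fset R}}) (A : {fset R}) : Prop :=
  forall t, t \in A <-> exists2 s, s \in F & t \in s.

(* K (given by the vertex sets of its simplices) is a triangulation of conv(A),
   i.e. a geometric simplicial complex with union conv(A), all of whose vertices
   lie in A.  Any <= D+1 distinct points of gamma_D are affinely independent, so
   the simplices are exactly conv(s) for nonempty s with #|s| <= D+1. *)
Definition triangulation (D : nat) (A : {fset R}) (K : {fset {fset R}}) : Prop :=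
  [/\ (forall s, s \in K -> [/\ s != fset0, s `<=` A & #|` s| <= D.+1]%N),
      (forall s u, s \in K -> u `<=` s -> u != fset0 -> u \in K),
      (forall s t, s \in K -> t \in K ->
         forall x, (inConv D s x /\ inConv D t x) <-> inConv D (s `&` t) x)
    & (forall x, inConv D A x <-> exists2 s, s \in K & inConv D s x)].

Definition non_extendable (D : nat) (F : {fset {fset R}}) (A : {fset R}) : Prop :=
  ~ exists K : {fset {fset R}}, triangulation D A K /\ F `<=` K.

End MomentCurve.

(* Main.v *)
Require Import Defs.
From HB Require Import structures.
From mathcomp Require Import all_boot all_order all_algebra finmap.
From mathcomp Require Import reals.
From mathcomp Require Import ring lra.
Import Order.TTheory GRing.Theory Num.Theory.
Local Open Scope ring_scope.
Local Open Scope fset_scope.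

Local Close Scope fset_scope.
Section Aux.
Context {R : realType}.
Implicit Types (s A B : {fset R}) (w c : R -> R).

Definition mom (s : {fset R}) (w : R -> R) (k : nat) : R :=
  \sum_(t <- s) w t * t ^+ k.
Definition fB (B : {fset R}) : {poly R} := \prod_(b <- B) ('X - b%:P).

Lemma fB_eval B x : (fB B).[x] = \prod_(b <- B) (x - b).
Proof. by rewrite /fB horner_prod; apply: eq_bigr => b _; rewrite hornerXsubC. Qed.

Lemma size_fB B : size (fB B) = (#|` B|).+1.
Proof. by rewrite /fB size_prod_XsubC. Qed.

Lemma int_poly s w (q : {poly R}) N : (size q <= N)%N ->
  \sum_(t <- s) w t * q.[t] = \sum_(k < N) q`_k * mom s w k.
Proof.
move=> hq.
under eq_bigr => t _ do rewrite (horner_coef_wide _ hq) mulr_sumr.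
rewrite exchange_big /=; apply: eq_bigr => k _.
by rewrite /mom mulr_sumr; apply: eq_bigr => t _; rewrite mulrCA.
Qed.

Lemma horner_wide (q : {poly R}) N x : (size q <= N)%N ->
  q.[x] = \sum_(k < N) q`_k * x ^+ k.
Proof. exact: horner_coef_wide. Qed.

Lemma momD s w v k : mom s (fun t => (w t + v t)%R) k = mom s w k + mom s v k.
Proof. by rewrite /mom -big_split; apply: eq_bigr => t _; rewrite mulrDl. Qed.

Lemma momZ s w a k : mom s (fun t => a * w t) k = a * mom s w k.
Proof. by rewrite /mom mulr_sumr; apply: eq_bigr => t _; rewrite mulrA. Qed.

Definition ext (u : {fset R}) w := fun t => if t \in u then w t else 0.

Lemma mom_ext u s w k : (u `<=` s)%fset -> mom s (ext u w) k = mom u w k.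
Proof.
move=> us; rewrite /mom.
rewrite (_ : \sum_(t <- u) w t * t ^+ k = \sum_(t <- u) ext u w t * t ^+ k).
  symmetry; apply: big_fset_incl => // x _ xu.
  by rewrite /ext (negbTE xu) mul0r.
by apply: eq_fbigr => x xu _; rewrite /ext xu.
Qed.

Lemma mom_eq s w v k : {in s, w =1 v} -> mom s w k = mom s v k.
Proof. by move=> h; rewrite /mom; apply: eq_fbigr => x xs _; rewrite h. Qed.

Lemma mom_U1 a s w k : a \notin s -> mom (a |` s)%fset w k = w a * a ^+ k + mom s w k.
Proof. by move=> h; rewrite /mom big_fsetU1. Qed.

Lemma mom_D1 a s w k : a \in s -> mom s w k = w a * a ^+ k + mom (s `\ a)%fset w k.
Proof. by move=> h; rewrite /mom (big_fsetD1 a). Qed.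

Lemma mom_ge0 s w k : (forall t, t \in s -> 0 <= w t) -> (forall t, t \in s -> 0 <= t) ->
  0 <= mom s w k.
Proof.
move=> h1 h2; rewrite /mom big_seq; apply: sumr_ge0 => t ts.
by rewrite mulr_ge0 ?h1 ?exprn_ge0 ?h2.
Qed.

Lemma gam_sum D s w i : (\sum_(t <- s) w t *: gam D t) 0 i = mom s w i.+1.
Proof. by rewrite summxE; apply: eq_bigr => t _; rewrite !mxE. Qed.

Lemma inConvP D s x : inConv D s x <->
  exists w, [/\ forall t, t \in s -> 0 <= w t, mom s w 0 = 1 &
     forall i : 'I_D, mom s w i.+1 = x 0 i].
Proof.
split=> -[w [h1 h2 h3]]; exists w; split => //.
- by rewrite /mom; under eq_bigr do rewrite expr0 mulr1.
- by move=> i; rewrite -gam_sum h3.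
- by move: h2; rewrite /mom; under eq_bigr do rewrite expr0 mulr1.
- by apply/rowP => i; rewrite gam_sum h3.
Qed.

Lemma inConv_mom D s1 s2 w1 w2 (x : 'rV[R]_D) :
  mom s1 w1 0 = 1 -> (forall i : 'I_D, mom s1 w1 i.+1 = x 0 i) ->
  mom s2 w2 0 = 1 -> (forall i : 'I_D, mom s2 w2 i.+1 = x 0 i) ->
  forall k, (k <= D)%N -> mom s1 w1 k = mom s2 w2 k.
Proof.
move=> a1 b1 a2 b2 [|k] hk; first by rewrite a1 a2.
by rewrite (b1 (Ordinal hk)) (b2 (Ordinal hk)).
Qed.


Lemma fB_root B b : b \in B -> (fB B).[b] = 0.
Proof. by move=> bB; rewrite fB_eval (big_fsetD1 b) //= subrr mul0r. Qed.

Lemma fB_neq0 B x : x \notin B -> (fB B).[x] != 0.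
Proof.
move=> xB; rewrite fB_eval prodf_seq_neq0; apply/allP => b bB /=.
by rewrite subr_eq0; apply: contraNneq xB => ->.
Qed.

Lemma fB_gt0 B x : (forall b, b \in B -> b < x) -> 0 < (fB B).[x].
Proof.
move=> h; rewrite fB_eval big_seq; apply: prodr_gt0 => b bB.
by rewrite subr_gt0 h.
Qed.

Lemma fB_U1 m B x : m \notin B -> (fB (m |` B)%fset).[x] = (x - m) * (fB B).[x].
Proof. by move=> mB; rewrite !fB_eval big_fsetU1. Qed.

Lemma mom_inj D s w v : (#|` s| <= D.+1)%N ->
  (forall k, (k <= D)%N -> mom s w k = mom s v k) -> {in s, w =1 v}.
Proof.
move=> hs hm t0 t0s.
set q := fB (s `\ t0)%fset.
have sq : (size q <= D.+1)%N.
  by rewrite /q size_fB; move: hs; rewrite (cardfsD1 t0 s) t0s.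
have E u : \sum_(t <- s) u t * q.[t] = u t0 * q.[t0].
  rewrite (big_fsetD1 t0) //= big1_fset ?addr0 // => t ts _.
  by rewrite /q fB_root // mulr0.
have := int_poly s w q D.+1 sq; have := int_poly s v q D.+1 sq.
rewrite !E => Hv Hw.
have : w t0 * q.[t0] = v t0 * q.[t0].
  rewrite Hv Hw; apply: eq_bigr => k _; rewrite hm //; exact: (ltn_ord k).
move/mulIf; apply.
by apply: fB_neq0; rewrite in_fsetD1 eqxx.
Qed.

Lemma seq_max (s : seq R) : s != [::] -> exists2 m, m \in s & forall a, a \in s -> a <= m.
Proof.
elim: s => // x [|y s] IH _.
  by exists x; rewrite ?mem_seq1 // => a; rewrite mem_seq1 => /eqP ->.
have [m ms hm] := IH isT.
case: (lerP m x) => hmx.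
  exists x; first by rewrite mem_head.
  move=> a; rewrite inE => /orP[/eqP -> //|/hm]; by move/le_trans; apply.
exists m; first by rewrite inE ms orbT.
move=> a; rewrite inE => /orP[/eqP -> |/hm //]; exact: ltW.
Qed.

Lemma fset_max (A : {fset R}) : A != fset0 -> exists2 m, m \in A & forall a, a \in A -> a <= m.
Proof.
move=> hA; have : (A : seq R) != [::].
  by apply: contraNneq hA => h; apply/eqP/fsetP => x; rewrite inE -[x \in A]/(x \in (A : seq R)) h.
move/seq_max => [m hm1 hm2]; exists m => //.
Qed.

Lemma fset_min (A : {fset R}) : A != fset0 -> exists2 m, m \in A & forall a, a \in A -> m <= a.
Proof.
move=> hA; have : (A : seq R) != [::].
  by apply: contraNneq hA => h; apply/eqP/fsetP => x; rewrite inE -[x \in A]/(x \in (A : seq R)) h.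
move=> h; have : [seq - x | x <- (A : seq R)] != [::] by case: (A : seq R) h.
move/seq_max => [m /mapP [x xA ->] hm]; exists x => // a aA.
by rewrite -lerN2; apply: hm; apply/mapP; exists a.
Qed.

Definition sgn (b : bool) : R := if b then 1 else -1.

Lemma sgnNN b : sgn b = - sgn (~~ b).
Proof. by case: b; rewrite /sgn /= ?opprK. Qed.

Definition Fam (sg : bool) (A B : {fset R}) (k : nat) : Prop :=
  [/\ (B `<=` A)%fset, #|` B| = k &
      forall a, a \in A -> a \notin B -> 0 < sgn sg * (fB B).[a]].

Definition Cov d (sg : bool) (A : {fset R}) : Prop :=
  forall c, (forall a, a \in A -> 0 <= c a) ->
  exists B, Fam sg A B d.+1 /\ exists g, (forall b, b \in B -> 0 <= g b) /\
     forall i, (i <= d)%N -> mom B g i = mom A c i.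

Definition Xprop d (sg : bool) (S : {fset R}) (p : R) : Prop :=
  forall c, (forall a, a \in S -> 0 <= c a) ->
  exists B, Fam sg S B d /\ exists beta, (forall b, b \in B -> 0 <= beta b) /\
     forall i, (i <= d)%N -> mom S c i = (mom S c 0 - mom B beta 0) * p ^+ i + mom B beta i.

Lemma mom_key s w p i : mom s w i - mom s w 0 * p ^+ i =
  - \sum_(j < i) p ^+ j * mom s (fun t => w t * (p - t)) (i.-1 - j).
Proof.
rewrite /mom mulr_suml -sumrB.
under [in RHS]eq_bigr do rewrite mulr_sumr.
rewrite exchange_big /= -sumrN; apply: eq_bigr => t _.
rewrite expr0 mulr1 -mulrBr subrXX mulr_sumr mulr_sumr -sumrN.
by apply: eq_bigr => j _; ring.
Qed.

Lemma X_of_Cov d sg S p : (1 <= d)%N -> (forall a, a \in S -> a < p) ->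
  Cov d.-1 sg S -> Xprop d sg S p.
Proof.
move=> hd hp hC c c0.
have [|B [FB [g [g0 hg]]]] := hC (fun t => c t * (p - t)).
  by move=> a aS; rewrite mulr_ge0 ?c0 // subr_ge0 ltW ?hp.
have [BS cB sB] := FB.
have pB b : b \in B -> p - b != 0.
  by move=> bB; rewrite subr_eq0 eq_sym lt_eqF // hp // (fsubsetP BS).
exists B; split; first by split => //; rewrite cB prednK.
exists (fun t => g t / (p - t)); split.
  move=> b bB; rewrite divr_ge0 ?g0 // subr_ge0 ltW ?hp //.
  exact: (fsubsetP BS).
move=> i hi.
have H : mom S c i - mom S c 0 * p ^+ i =
   mom B (fun t => g t / (p - t)) i - mom B (fun t => g t / (p - t)) 0 * p ^+ i.
  rewrite !mom_key; congr (- _); apply: eq_bigr => j _; congr (_ * _).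
  rewrite -hg; last by rewrite (leq_trans (leq_subr _ _)) // -!subn1 leq_sub2r.
  by apply: mom_eq => t tB /=; rewrite divfK ?pB.
rewrite -(subrK (mom S c 0 * p ^+ i) (mom S c i)) H; ring.
Qed.

Lemma cov_all n : forall d sg (A : {fset R}), #|` A| = n -> (d.+1 <= n)%N -> Cov d sg A.
Proof.
elim: n => [//|n IH] d sg A hA hdn c c0.
have [hAd|hAd] := eqVneq n d.
  subst d; exists A; split.
    by split => // a aA; rewrite aA.
  by exists c; split.
have hdn' : (d.+1 <= n)%N by rewrite ltn_neqAle eq_sym hAd /= -ltnS.
have A0 : A != fset0 by apply/eqP => h; rewrite h cardfs0 in hA.
have [m mA hm] := fset_max A A0.
set S := (A `\ m)%fset.
have AS : A = (m |` S)%fset by rewrite fsetD1K.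
have mS : m \notin S by rewrite in_fsetD1 eqxx.
have cS : #|` S| = n by move: hA; rewrite AS cardfsU1 mS add1n => -[].
have Sm a : a \in S -> a < m.
  by rewrite in_fsetD1 => /andP [am aA]; rewrite lt_neqAle am hm.
have SA : (S `<=` A)%fset by apply: fsubsetDl.
have momA i : mom A c i = c m * m ^+ i + mom S c i by rewrite {1}AS mom_U1.
case: d hdn hAd hdn' => [|d] hdn hAd hdn'.
  have [m0 m0A hm0] := fset_min A A0.
  exists (if sg then [fset m0] else [fset m])%fset; split.
    case: sg; split; rewrite ?cardfs1 ?fsub1set //.
      move=> a aA; rewrite inE => am; rewrite fB_eval big_seq_fset1 mul1r.
      by rewrite subr_gt0 lt_neqAle eq_sym am hm0.
    move=> a aA; rewrite inE => am; rewrite fB_eval big_seq_fset1 mulN1r.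
    by rewrite oppr_gt0 subr_lt0 lt_neqAle am hm.
  exists (fun _ => mom A c 0); split.
    by move=> b _; rewrite /mom big_seq; apply: sumr_ge0 => t tA; rewrite expr0 mulr1 c0.
  by move=> [|i] // _; case: sg; rewrite /mom big_seq_fset1 expr0 mulr1.
have hX : Xprop d.+1 (~~ sg) S m.
  apply: X_of_Cov => //; apply: IH => //; exact: ltnW.
have [|B' [[B'S cB' sB'] [beta [beta0 hbeta]]]] := hX c.
  by move=> a aS; apply: c0; apply: (fsubsetP SA).
set C := mom S c 0; set K := mom B' beta 0.
have mB' : m \notin B' by apply: contra mS; apply: (fsubsetP B'S).
have hsg : 0 <= sgn (~~ sg) * (C - K).
  set f := fB B'.
  have sf : (size f <= d.+2)%N by rewrite size_fB cB'.
  have E1 := int_poly S c f d.+2 sf.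
  have E2 : \sum_(t <- S) c t * f.[t] = (C - K) * f.[m].
    rewrite E1 (@horner_wide f d.+2 m sf) mulr_sumr.
    have E3 := int_poly B' beta f d.+2 sf.
    have E4 : \sum_(t <- B') beta t * f.[t] = 0.
      by rewrite big1_fset // => t tB _; rewrite /f fB_root // mulr0.
    rewrite E4 in E3.
    transitivity (\sum_(k < d.+2) ((C - K) * (f`_k * m ^+ k) + f`_k * mom B' beta k)).
      apply: eq_bigr => k _; rewrite hbeta; last exact: (ltn_ord k).
      rewrite -/C -/K. ring.
    by rewrite big_split /= -E3 addr0.
  have fm : 0 < f.[m] by apply: fB_gt0 => b bB; apply: Sm; apply: (fsubsetP B'S).
  have : 0 <= sgn (~~ sg) * \sum_(t <- S) c t * f.[t].
    rewrite mulr_sumr big_seq; apply: sumr_ge0 => t tS.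
    case: (boolP (t \in B')) => tB.
      by rewrite /f fB_root // !mulr0.
    rewrite mulrCA mulr_ge0 ?c0 ?(fsubsetP SA) //; exact: ltW (sB' t tS tB).
  by rewrite E2 mulrA pmulr_lge0.
have hgeneric : forall i, (i <= d.+1)%N -> mom S c i = (C - K) * m ^+ i + mom B' beta i by [].
case: (lerP 0 (c m + C - K)) => hQ.
  exists (m |` B')%fset; split.
    split.
    - by rewrite fsubUset fsub1set mA (fsubset_trans B'S SA).
    - by rewrite cardfsU1 mB' cB'.
    - move=> a aA; rewrite in_fset1U negb_or => /andP [am aB'].
      have aS : a \in S by rewrite in_fsetD1 am.
      rewrite fB_U1 // mulrCA.
      have h := sB' a aS aB'; have ham := Sm a aS.
      rewrite sgnNN mulNr mulrN -mulNr opprB; apply: mulr_gt0 => //.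
      by rewrite subr_gt0.
  exists (fun t => if t == m then c m + C - K else beta t); split.
    move=> b; rewrite in_fset1U; case: eqP => [_ _|bm /= bB]; [exact: hQ | exact: beta0].
  move=> i hi; rewrite mom_U1 // eqxx momA hbeta //.
  rewrite (@mom_eq _ _ beta); last by move=> t tB; case: eqP => // tm; rewrite -tm tB in mB'.
  rewrite -/C -/K; ring.
have cm0 := c0 m mA.
have sgT : sg.
  apply/negPn/negP => nsg; move: hsg; rewrite (negbTE nsg) /sgn /= mul1r => h.
  by move: hQ; rewrite -addrA ltNge addr_ge0.
have KC : c m < K - C by rewrite ltrBrDr -subr_lt0.
have KC0 : 0 < K - C by apply: le_lt_trans KC.
set th := c m / (K - C).
have th0 : 0 <= th by rewrite divr_ge0 // ltW.
have th1 : th <= 1 by rewrite ler_pdivrMr // mul1r ltW.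
set e := fun t => th * ext B' beta t + (1 - th) * c t.
have e0 : forall a, a \in S -> 0 <= e a.
  move=> a aS; rewrite /e addr_ge0 // mulr_ge0 ?subr_ge0 ?c0 ?(fsubsetP SA) //.
  by rewrite /ext; case: ifP => // aB; apply: beta0.
have [B [[BS cB sB] [g [g0 hg]]]] := IH d.+1 sg S cS hdn' e e0.
exists B; split.
  split => //; first exact: (fsubset_trans BS SA).
  move=> a aA aB; case: (eqVneq a m) => [->|am].
    rewrite sgT /sgn mul1r; apply: fB_gt0 => b bB; apply: Sm; exact: (fsubsetP BS).
  by apply: sB => //; rewrite in_fsetD1 am.
exists g; split => // i hi; rewrite hg // momA.
have -> : mom S e i = th * mom S (ext B' beta) i + (1 - th) * mom S c i.
  by rewrite /mom /e !mulr_sumr -big_split; apply: eq_bigr => t _ /=; rewrite mulrDl !mulrA.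
rewrite mom_ext // hbeta // -/C -/K.
have KCn : K - C != 0 by rewrite gt_eqF.
rewrite -[c m](divfK KCn) -/th; ring.
Qed.

Lemma sum0_each (s : {fset R}) (F : R -> R) : (forall t, t \in s -> 0 <= F t) ->
  \sum_(t <- s) F t = 0 -> forall t, t \in s -> F t = 0.
Proof.
move=> h0 h t ts.
have : \sum_(t <- s | t \in s) F t == 0 by rewrite -big_seq h.
rewrite psumr_eq0; last by move=> i /h0.
by move/allP/(_ t ts); rewrite ts /= => /eqP.
Qed.

Lemma inConv_sub D (u t : {fset R}) x : (u `<=` t)%fset -> inConv D u x -> inConv D t x.
Proof.
move=> ut /inConvP [w [w0 w1 w2]]; apply/inConvP; exists (ext u w); split.
- by move=> a _; rewrite /ext; case: ifP => // /w0.
- by rewrite mom_ext.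
- by move=> i; rewrite mom_ext.
Qed.

Lemma inConv_restrict D (u t : {fset R}) w (x : 'rV[R]_D) : (u `<=` t)%fset ->
  (forall a, a \in t -> 0 <= w a) -> mom t w 0 = 1 ->
  (forall i : 'I_D, mom t w i.+1 = x 0 i) ->
  (forall a, a \in t -> a \notin u -> w a = 0) -> inConv D u x.
Proof.
move=> ut w0 w1 w2 wz.
have E k : mom t w k = mom u w k.
  rewrite -(mom_ext u t w k ut); apply: mom_eq => a at_; rewrite /ext.
  by case: ifP => // /negbT /(wz a at_) ->.
apply/inConvP; exists w; split.
- by move=> a /(fsubsetP ut) /w0.
- by rewrite -E.
- by move=> i; rewrite -E.
Qed.

Lemma inConv_n0 D s x : inConv D s x -> s != fset0.
Proof.
move=> /inConvP [w [_ w1 _]]; apply/eqP => s0; move: w1.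
by rewrite s0 /mom big_seq_fset0 => /eqP; rewrite eq_sym oner_eq0.
Qed.

Lemma inConv_moms D s t x : inConv D s x -> inConv D t x ->
  exists w v, [/\ forall a, a \in s -> 0 <= w a, forall a, a \in t -> 0 <= v a,
    mom s w 0 = 1, (forall i : 'I_D, mom s w i.+1 = x 0 i) &
    forall k, (k <= D)%N -> mom s w k = mom t v k].
Proof.
move=> /inConvP [w [w0 w1 w2]] /inConvP [v [v0 v1 v2]].
by exists w, v; split => //; apply: inConv_mom w1 w2 v1 v2.
Qed.

Lemma int_eq D s t w v (f : {poly R}) : (size f <= D.+1)%N ->
  (forall k, (k <= D)%N -> mom s w k = mom t v k) ->
  \sum_(a <- s) w a * f.[a] = \sum_(a <- t) v a * f.[a].
Proof.
move=> sf hk; rewrite (int_poly s w f D.+1 sf) (int_poly t v f D.+1 sf).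
by apply: eq_bigr => k _; rewrite hk //; exact: (ltn_ord k).
Qed.

Lemma sep D (s t : {fset R}) (f : {poly R}) (x : 'rV[R]_D) : (size f <= D.+1)%N ->
  (forall a, a \in s -> f.[a] <= 0) -> (forall a, a \in s -> a \notin t -> f.[a] < 0) ->
  (forall a, a \in t -> 0 <= f.[a]) ->
  inConv D s x -> inConv D t x -> inConv D (s `&` t)%fset x.
Proof.
move=> sf fs fst ft hs ht.
have [w [v [w0 v0 w1 w2 hk]]] := @inConv_moms D s t x hs ht.
have E := @int_eq D s t w v f sf hk.
have L : \sum_(a <- s) w a * f.[a] <= 0.
  by rewrite big_seq; apply: sumr_le0 => a as_; rewrite mulr_ge0_le0 ?w0 ?fs.
have G : 0 <= \sum_(a <- t) v a * f.[a].
  by rewrite big_seq; apply: sumr_ge0 => a at_; rewrite mulr_ge0 ?v0 ?ft.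
have Z : \sum_(a <- s) - (w a * f.[a]) = 0.
  by rewrite sumrN; apply/eqP; rewrite oppr_eq0 eq_le L E G.
apply: (@inConv_restrict D (s `&` t)%fset s w x (fsubsetIl s t) w0 w1 w2) => a as_ ast.
have at_ : a \notin t by move: ast; rewrite in_fsetI as_.
have Z0 : forall b, b \in s -> 0 <= - (w b * f.[b]).
  by move=> b bs; rewrite oppr_ge0 mulr_ge0_le0 ?w0 ?fs.
move: (@sum0_each s (fun a => - (w a * f.[a])) Z0 Z a as_) => /= /eqP; rewrite oppr_eq0 mulf_eq0 => /orP [/eqP //|].
by rewrite lt_eqF ?fst.
Qed.


Lemma sumU1 p (B : {fset R}) (F : R -> R) : p \notin B ->
  \sum_(a <- (p |` B)%fset) F a = F p + \sum_(a <- B) F a.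
Proof. by move=> pB; rewrite big_fsetU1. Qed.

Lemma sum_root (B : {fset R}) w : \sum_(a <- B) w a * (fB B).[a] = 0.
Proof. by rewrite big1_fset // => a aB _; rewrite fB_root // mulr0. Qed.

Lemma sep2 D (B B' : {fset R}) p (x : 'rV[R]_D) :
  (#|` B| <= D)%N -> (#|` B'| <= D)%N -> p \notin B -> p \notin B' ->
  0 < (fB B).[p] -> 0 < (fB B').[p] ->
  (forall b, b \in B' -> (fB B).[b] <= 0) -> (forall b, b \in B' -> b \notin B -> (fB B).[b] < 0) ->
  (forall b, b \in B -> (fB B').[b] <= 0) ->
  inConv D (p |` B)%fset x -> inConv D (p |` B')%fset x ->
  inConv D ((p |` B) `&` (p |` B'))%fset x.
Proof.
move=> cB cB' pB pB' fp f'p h1 h2 h3 hs ht.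
have [w [v [w0 v0 w1 w2 hk]]] := @inConv_moms D _ _ x hs ht.
have sf : (size (fB B) <= D.+1)%N by rewrite size_fB.
have sf' : (size (fB B') <= D.+1)%N by rewrite size_fB.
have E1 := @int_eq D _ _ w v _ sf hk.
have E2 := @int_eq D _ _ w v _ sf' hk.
rewrite !sumU1 // sum_root addr0 in E1.
rewrite !sumU1 // sum_root addr0 in E2.
set S1 := \sum_(a <- B') v a * (fB B).[a] in E1.
set S2 := \sum_(a <- B) w a * (fB B').[a] in E2.
have S1le : S1 <= 0 by rewrite /S1 big_seq; apply: sumr_le0 => a aB; rewrite mulr_ge0_le0 ?v0 ?h1 // in_fset1U aB orbT.
have S2le : S2 <= 0 by rewrite /S2 big_seq; apply: sumr_le0 => a aB; rewrite mulr_ge0_le0 ?w0 ?h3 // in_fset1U aB orbT.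
have le1 : w p <= v p.
  by rewrite -subr_le0 -(pmulr_lle0 _ fp) mulrBl E1 addrAC subrr add0r.
have le2 : v p <= w p.
  by rewrite -subr_le0 -(pmulr_lle0 _ f'p) mulrBl -E2 addrAC subrr add0r.
have eqp : w p = v p by apply/eqP; rewrite eq_le le1 le2.
have S10 : S1 = 0 by apply: (addrI (v p * (fB B).[p])); rewrite addr0 -E1 eqp.
have Z0 : forall b, b \in B' -> 0 <= - (v b * (fB B).[b]).
  by move=> b bB; rewrite oppr_ge0 mulr_ge0_le0 ?v0 ?h1 // in_fset1U bB orbT.
have Z : \sum_(a <- B') - (v a * (fB B).[a]) = 0 by rewrite sumrN -/S1 S10 oppr0.
have v1 : mom (p |` B')%fset v 0 = 1 by rewrite -hk.
have v2 : forall i : 'I_D, mom (p |` B')%fset v i.+1 = x 0 i.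
  by move=> i; rewrite -hk ?w2 //; exact: (ltn_ord i).
apply: (@inConv_restrict D _ (p |` B')%fset v x (fsubsetIr _ _) v0 v1 v2) => a aB' au.
have ap : a != p by apply: contraNneq au => ->; rewrite in_fsetI !fset1U1.
have aB'' : a \in B' by move: aB'; rewrite in_fset1U (negbTE ap).
have aB : a \notin B by apply: contraNN au => aB; rewrite in_fsetI aB' in_fset1U aB orbT.
move: (@sum0_each B' _ Z0 Z a aB'') => /= /eqP; rewrite oppr_eq0 mulf_eq0 => /orP [/eqP //|].
by rewrite lt_eqF ?h2.
Qed.


Definition Vset D (A : {fset R}) : {fset {fset R}} :=
  [fset B in fpowerset A | (#|` B| == D) && all (fun a => (a \in B) || ((fB B).[a] < 0)) A]%fset.

Lemma inV D A B : B \in Vset D A <-> Fam false A B D.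
Proof.
rewrite /Vset !inE /= fpowersetE; split.
  move=> /andP [BA /andP [/eqP cB /allP h]]; split => // a aA aB.
  by move: (h a aA); rewrite (negbTE aB) /= /sgn mulN1r oppr_gt0.
move=> [BA cB h]; rewrite BA cB eqxx /=; apply/allP => a aA.
by case: (boolP (a \in B)) => //= aB; move: (h a aA aB); rewrite /sgn mulN1r oppr_gt0.
Qed.

Lemma ar1 (N K : R) : 0 <= N -> 0 <= K -> [/\ 0 < N + K + 1, N < N + K + 1 & K < N + K + 1].
Proof. by move=> *; split; lra. Qed.

Lemma sum_ge0' (s : {fset R}) w : (forall a, a \in s -> 0 <= w a) -> 0 <= mom s w 0.
Proof. by move=> h; rewrite /mom big_seq; apply: sumr_ge0 => t ts; rewrite expr0 mulr1 h. Qed.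

Lemma star D (A : {fset R}) p (K' : {fset {fset R}}) :
  (forall a, a \in A -> a < p) -> Xprop D false A p ->
  (exists B0, B0 \in Vset D A) ->
  triangulation D (p |` A)%fset K' ->
  (forall B, B \in Vset D A -> (p |` B)%fset \in K') ->
  forall s', s' \in K' -> p \in s' -> exists2 B, B \in Vset D A & (s' `<=` p |` B)%fset.
Proof.
move=> hp HX [B0 B0V] [K1 K2 K3 K4] KB s' s'K ps'.
have [s'0 s'A' cs'] := K1 s' s'K.
set S0 := (s' `\ p)%fset.
have S0A : (S0 `<=` A)%fset.
  apply/fsubsetP => t; rewrite in_fsetD1 => /andP [tp ts].
  by move: (fsubsetP s'A' t ts); rewrite in_fset1U (negbTE tp).
case: (eqVneq S0 fset0) => [S00 | S0n].
  exists B0 => //; apply/fsubsetP => t ts; rewrite in_fset1U; case: eqVneq => //= tp.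
  have : t \in S0 by rewrite in_fsetD1 tp ts.
  by rewrite S00 inE.
set c := ext S0 (fun _ => 1).
have c0 : forall a, a \in A -> 0 <= c a by move=> a _; rewrite /c /ext; case: ifP.
have [B [FB [beta [beta0 hb]]]] := HX c c0.
have BV : B \in Vset D A by apply/inV.
have [BA cB _] := FB.
have pB : p \notin B by apply/negP => /(fsubsetP BA) /hp; rewrite ltxx.
have pS0 : p \notin S0 by rewrite in_fsetD1 eqxx.
have s'E : s' = (p |` S0)%fset by rewrite fsetD1K.
set N := mom A c 0; set Kp := mom B beta 0.
have N0 : 0 <= N by apply: sum_ge0'.
have K0 : 0 <= Kp by apply: sum_ge0'.
have [eps [epos eN eK]] : exists eps : R, [/\ 0 < eps, eps * N < 1 & eps * Kp < 1].
  have [a1 a2 a3] := ar1 _ _ N0 K0.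
  exists (N + Kp + 1)^-1; split; first by rewrite invr_gt0.
    by rewrite mulrC ltr_pdivrMr // mul1r.
  by rewrite mulrC ltr_pdivrMr // mul1r.
set wz := fun t => if t == p then 1 - eps * N else eps.
set vz := fun t => if t == p then 1 - eps * Kp else eps * beta t.
have momw k : mom s' wz k = (1 - eps * N) * p ^+ k + eps * mom A c k.
  rewrite {1}s'E mom_U1 // /wz eqxx; congr (_ + _).
  rewrite /c mom_ext // /mom mulr_sumr; apply: eq_fbigr => t tS0 _.
  have tp : (t == p) = false by apply/negbTE; apply: contraNneq pS0 => <-.
  by rewrite tp mul1r.
have momv k : mom (p |` B)%fset vz k = (1 - eps * Kp) * p ^+ k + eps * mom B beta k.
  rewrite mom_U1 // /vz eqxx; congr (_ + _).
  rewrite /mom mulr_sumr; apply: eq_fbigr => t tB _.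
  have tp : (t == p) = false by apply/negbTE; apply: contraNneq pB => <-.
  by rewrite tp mulrA.
have eqwv k : (k <= D)%N -> mom s' wz k = mom (p |` B)%fset vz k.
  by move=> hk; rewrite momw momv hb // -/N -/Kp; ring.
set z : 'rV[R]_D := \row_(i < D) mom s' wz i.+1.
have wz0 : forall t, t \in s' -> 0 < wz t.
  by move=> t _; rewrite /wz; case: eqP => _ //; rewrite subr_gt0.
have wz1 : mom s' wz 0 = 1 by rewrite momw expr0 mulr1 -/N; ring.
have wz2 : forall i : 'I_D, mom s' wz i.+1 = z 0 i by move=> i; rewrite mxE.
have hz1 : inConv D s' z.
  by apply/inConvP; exists wz; split => // t /wz0 /ltW.
have hz2 : inConv D (p |` B)%fset z.
  apply/inConvP; exists vz; split.
  - move=> t tpB; rewrite /vz; case: eqP => tp; first by rewrite subr_ge0 ltW.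
    apply: mulr_ge0; first exact: ltW.
    by apply: beta0; move: tpB; rewrite in_fset1U; move/eqP: tp => /negbTE ->.
  - by rewrite momv expr0 mulr1 -/Kp; ring.
  - by move=> i; rewrite mxE -eqwv //; exact: (ltn_ord i).
have := proj1 (K3 _ _ s'K (KB B BV) z) (conj hz1 hz2).
move=> /inConvP [u [u0 u1 u2]].
have hm : forall k, (k <= D)%N -> mom s' (ext (s' `&` (p |` B))%fset u) k = mom s' wz k.
  move=> k hk; rewrite mom_ext ?fsubsetIl //.
  exact: (@inConv_mom D _ _ _ _ z u1 u2 wz1 wz2 k hk).
have hinj := @mom_inj D s' _ _ cs' hm.
exists B => //; apply/fsubsetP => t ts.
have := hinj t ts; rewrite /ext; case: ifP => [|_ h0].
  by rewrite in_fsetI => /andP [_ ->].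
by move: (wz0 t ts); rewrite -h0 ltxx.
Qed.

Lemma drop_p D (A : {fset R}) p B s' x : (forall a, a \in A -> a < p) ->
  B \in Vset D A -> (s' `<=` p |` B)%fset -> inConv D A x -> inConv D s' x ->
  inConv D (s' `\ p)%fset x.
Proof.
move=> hp /inV [BA cB hB] s'B hA hs.
case: (boolP (p \in s')) => ps; last by rewrite mem_fsetD1.
have [w [c [w0 c0 w1 w2 hk]]] := @inConv_moms D _ _ x hs hA.
have sf : (size (fB B) <= D.+1)%N by rewrite size_fB cB.
have E := @int_eq D _ _ w c _ sf hk.
have fp : 0 < (fB B).[p] by apply: fB_gt0 => b /(fsubsetP BA) /hp.
have L : \sum_(a <- A) c a * (fB B).[a] <= 0.
  rewrite big_seq; apply: sumr_le0 => a aA; apply: mulr_ge0_le0; first exact: c0.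
  case: (boolP (a \in B)) => aB; first by rewrite fB_root.
  by move: (hB a aA aB); rewrite /sgn mulN1r oppr_gt0 => /ltW.
rewrite (big_fsetD1 p) //= big1_fset ?addr0 in E; last first.
  move=> t; rewrite in_fsetD1 => /andP [tp ts] _.
  move: (fsubsetP s'B t ts); rewrite in_fset1U (negbTE tp) /= => tB.
  by rewrite fB_root // mulr0.
have wp : w p = 0.
  apply/eqP; rewrite eq_le w0 // andbT -(pmulr_lle0 _ fp) E //.
apply: (@inConv_restrict D _ s' w x (fsubD1set _ _) w0 w1 w2) => a as_.
by rewrite in_fsetD1 as_ andbT negbK => /eqP ->.
Qed.

End Aux.

Local Open Scope fset_scope.

Theorem proposition4p2 (R : realType) (D : nat) (F : {fset {fset R}})
    (A : {fset R}) (n : nat) :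
  (1 <= D)%N ->
  nonoverlapping_Dsimplices D F ->
  vertex_union F A ->
  #|` A| = n ->
  non_extendable D F A ->
  exists (F' : {fset {fset R}}) (A' : {fset R}),
    [/\ F `<=` F',
        nonoverlapping_Dsimplices D F',
        vertex_union F' A',
        #|` A'| = n.+1
      & non_extendable D F' A'].
Proof.
move=> hD [HFs HFno] Hvu HA Hne.
have FA : forall s, s \in F -> s `<=` A.
  by move=> s sF; apply/fsubsetP => t ts; apply/Hvu; exists s.
have [F0|[sig sigF]] := fset_0Vmem F.
  exfalso; apply: Hne; exists fset0; split; last by rewrite F0.
  have A0 : A = fset0.
    apply/fsetP => t; rewrite inE; apply/idP => /Hvu [s]; by rewrite F0 inE.
  split; try by move=> s; rewrite inE.
  move=> x; split; last by move=> [s]; rewrite inE.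
  by move/inConv_n0; rewrite A0 eqxx.
have cA : (D.+1 <= #|` A|)%N.
  by have := HFs sig sigF; rewrite /Dsimplex => <-; apply: fsubset_leq_card; apply: FA.
have A0 : A != fset0 by apply/eqP => A0; rewrite A0 cardfs0 in cA.
have [m mA hm] := @fset_max R A A0.
pose p : R := (m + 1)%R.
have hp : forall a, a \in A -> (a < p)%R.
  by move=> a aA; rewrite /p (le_lt_trans (hm a aA)) // ltrDl ltr01.
have pA : p \notin A by apply/negP => /hp; rewrite ltxx.
have HX : Xprop D false A p.
  apply: X_of_Cov => //; apply: (@cov_all _ #|` A|) => //; rewrite prednK //; exact: ltnW.
pose V := Vset D A.
have V0 : exists B0, B0 \in V.
  have [|B [FB _]] := HX (fun _ => 1%R); first by move=> *; exact: ler01.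
  by exists B; apply/inV.
pose New := (fun B => p |` B) @` V.
have inNew s : s \in New -> exists2 B, B \in V & s = p |` B by move/imfsetP.
have BNew B : B \in V -> (p |` B) \in New by move=> BV; apply/imfsetP; exists B.
have Vf B : B \in V -> [/\ B `<=` A, #|` B| = D, p \notin B,
   (0 < (fB B).[p])%R & forall a, a \in A -> a \notin B -> ((fB B).[a] < 0)%R].
  move/inV => [BA cB hB]; split => //.
  - by apply/negP => /(fsubsetP BA) /hp; rewrite ltxx.
  - by apply: fB_gt0 => b /(fsubsetP BA) /hp.
  - by move=> a aA aB; move: (hB a aA aB); rewrite /sgn mulN1r oppr_gt0.
have VA B : B \in V -> forall a, a \in A -> ((fB B).[a] <= 0)%R.
  move=> BV a aA; have [_ _ _ _ h] := Vf B BV.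
  by case: (boolP (a \in B)) => aB; [rewrite fB_root | exact/ltW/h].
have pBge B : B \in V -> forall a, a \in p |` B -> (0 <= (fB B).[a])%R.
  move=> BV a; have [_ _ _ h _] := Vf B BV.
  by rewrite in_fset1U => /orP [/eqP -> | aB]; [exact: ltW | rewrite fB_root].
have sepFN s B x : s \in F -> B \in V -> inConv D s x -> inConv D (p |` B) x ->
    inConv D (s `&` (p |` B)) x.
  move=> sF BV hs ht; have [BA cB pB fp hB] := Vf B BV.
  apply: (@sep _ D s (p |` B) (fB B) x) => //.
  - by rewrite size_fB cB.
  - by move=> a /(fsubsetP (FA s sF)); apply: VA.
  - move=> a as_; rewrite in_fset1U negb_or => /andP [_ aB].
    by apply: hB => //; apply: (fsubsetP (FA s sF)).
  - exact: pBge.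
exists (F `|` New), (p |` A); split.
- exact: fsubsetUl.
- split.
  + move=> s; rewrite in_fsetU => /orP [/HFs //|/inNew [B BV ->]].
    by have [_ cB pB _ _] := Vf B BV; rewrite /Dsimplex cardfsU1 pB cB.
  + move=> s t; rewrite !in_fsetU => /orP [sF|/inNew [B BV ->]] /orP [tF|/inNew [B' B'V ->]].
    * exact: HFno.
    * by move=> [x [hs ht hn]]; apply: hn; apply: sepFN.
    * by move=> [x [hs ht hn]]; apply: hn; rewrite fsetIC; apply: sepFN.
    * move=> [x [hs ht hn]]; apply: hn.
      have [BA cB pB fp hB] := Vf B BV; have [B'A cB' pB' f'p hB'] := Vf B' B'V.
      apply: (@sep2 _ D B B' p x) => //; rewrite ?cB ?cB' //.
      - by move=> b /(fsubsetP B'A); apply: VA.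
      - by move=> b bB' bB; apply: hB => //; apply: (fsubsetP B'A).
      - by move=> b /(fsubsetP BA); apply: VA.
- move=> t; split.
    rewrite in_fset1U => /orP [/eqP -> | tA].
      have [B0 B0V] := V0; exists (p |` B0); last exact: fset1U1.
      by rewrite in_fsetU BNew ?orbT.
    have [s sF ts] := (Hvu t).1 tA; exists s => //; by rewrite in_fsetU sF.
  move=> [s]; rewrite in_fsetU => /orP [sF ts| /inNew [B BV ->]].
    by rewrite in_fset1U (fsubsetP (FA s sF) t ts) orbT.
  have [BA _ _ _ _] := Vf B BV.
  by rewrite !in_fset1U => /orP [->//| tB]; rewrite (fsubsetP BA) ?orbT.
- by rewrite cardfsU1 pA HA.
- move=> [K' [[K1 K2 K3 K4] FK]]; apply: Hne.
  have KB : forall B, B \in V -> (p |` B) \in K'.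
    by move=> B BV; apply: (fsubsetP FK); rewrite in_fsetU BNew ?orbT.
  have hst := @star _ D A p K' hp HX V0 (And4 K1 K2 K3 K4) KB.
  pose KK := [fset s in K' | s `<=` A].
  have inK s : (s \in KK) = (s \in K') && (s `<=` A) by rewrite in_fset !inE.
  exists KK; split; last first.
    by apply/fsubsetP => s sF; rewrite inK FA // andbT; apply: (fsubsetP FK); rewrite in_fsetU sF.
  split.
  + move=> s; rewrite inK => /andP [sK sA]; have [? ? ?] := K1 s sK; by split.
  + move=> s u; rewrite !inK => /andP [sK sA] us u0.
    by rewrite (K2 s u sK us u0) (fsubset_trans us sA).
  + move=> s t; rewrite !inK => /andP [sK _] /andP [tK _]; exact: K3.
  + move=> x; split; last first.
      by move=> [s]; rewrite inK => /andP [_ sA] hs; apply: inConv_sub sA hs.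
    move=> hA.
    have : inConv D (p |` A) x by apply: inConv_sub hA; apply: fsubsetU1.
    move=> /K4 [s' s'K hs'].
    have [_ s'A' _] := K1 s' s'K.
    case: (boolP (p \in s')) => ps.
      have [B BV s'B] := hst s' s'K ps.
      have h := @drop_p _ D A p B s' x hp BV s'B hA hs'.
      exists (s' `\ p) => //; rewrite inK (K2 s' _ s'K (fsubD1set _ _) (@inConv_n0 _ D _ x h)) /=.
      have [BA _ _ _ _] := Vf B BV.
      apply/fsubsetP => t; rewrite in_fsetD1 => /andP [tp ts].
      by move: (fsubsetP s'B t ts); rewrite in_fset1U (negbTE tp) /= => /(fsubsetP BA).
    exists s' => //; rewrite inK s'K /=.
    apply/fsubsetP => t ts; move: (fsubsetP s'A' t ts); rewrite in_fset1U.
    by case: eqVneq => [tp|] //=; rewrite -tp ts in ps.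
Qed.
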